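(* Assume $V=L$. Let $\xi_0,\xi_1,\xi_2,\dots\in\Xi$, let $\vartheta=\bigcup_n\xi_n$, and let $X_n\in\mathrm{IPS}_{\xi_n}$ ($n<\omega$) satisfy the coherence condition $X_n\restriction(\xi_k\cap\xi_n)=X_k\restriction(\xi_k\cap\xi_n)$ for all $k,n$. Then $X=\bigcap_n(X_n\uparrow\vartheta)$ belongs to $\mathrm{IPS}_\vartheta$ and $X\restriction\xi_n=X_n$ for all $n$. In particular, if the sets $\xi_0,\xi_1,\dots$ are pairwise disjoint, then the coherence condition holds automatically, so $X=\bigcap_n(X_n\uparrow\vartheta)\in\mathrm{IPS}_\vartheta$ and $X\restriction\xi_n=X_n$ for all $n$.
   Context: $T$ is the set of all nonempty finite sequences of countable ordinals, ordered by strict extension $\subset$. $\Xi$ is the set of all at most countable $\xi\subseteq T$ closed downward under $\subset$. $D=2^\omega$; $D^\xi$ is the product of $\xi$ copies of $D$ (with $D^\varnothing=\{\varnothing\}$). For $\eta\subseteq\xi$ in $\Xi$: $x\restriction\eta$ is restriction of $x\in D^\xi$, $X\restriction\eta=\{x\restriction\eta:x\in X\}$, and $Y\uparrow\xi=\{x\in D^\xi:x\restriction\eta\in Y\}$ for $Y\subseteq D^\eta$. For $\zeta\in\Xi$, $\mathrm{IPS}_\zeta$ is the set of all $X\subseteq D^\zeta$ for which there is a homeomorphism $H$ of $D^\zeta$ onto $X$ such that for all $x_0,x_1\in D^\zeta$ and all $\xi\in\Xi$, $\xi\subseteq\zeta$: $x_0\restriction\xi=x_1\restriction\xi\iff H(x_0)\restriction\xi=H(x_1)\restriction\xi$.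 *)

(* Defs.v *)
From Stdlib Require Import List ClassicalEpsilon.
Import ListNotations.

(** * Countable ordinals
    A countable ordinal is the isomorphism class of a (strict) well-order
    on a subset of nat (the empty order gives 0, finite orders give finite
    ordinals). *)
Record WO := {
  wo_dom : nat -> Prop;
  wo_rel : nat -> nat -> Prop;
  wo_field : forall a b, wo_rel a b -> wo_dom a /\ wo_dom b;
  wo_irrefl : forall a, ~ wo_rel a a;
  wo_trans : forall a b c, wo_rel a b -> wo_rel b c -> wo_rel a c;
  wo_total : forall a b, wo_dom a -> wo_dom b -> a = b \/ wo_rel a b \/ wo_rel b a;
  wo_wf : well_founded wo_rel }.

Definition wo_iso (w w' : WO) : Prop :=
  exists f : nat -> nat,
    (forall a, wo_dom w a -> wo_dom w' (f a)) /\
    (forall a b, wo_dom w a -> wo_dom w b -> f a = f b -> a = b) /\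
    (forall b, wo_dom w' b -> exists a, wo_dom w a /\ f a = b) /\
    (forall a b, wo_dom w a -> wo_dom w b -> (wo_rel w a b <-> wo_rel w' (f a) (f b))).

Definition Ord : Type := { C : WO -> Prop | exists w, forall w', C w' <-> wo_iso w w' }.

Definition T : Type := { s : list Ord | s <> [] }.

Definition ext_lt (s t : T) : Prop :=
  exists u : list Ord, u <> [] /\ proj1_sig t = proj1_sig s ++ u.

Definition countable_set (A : T -> Prop) : Prop :=
  exists f : T -> nat, forall s t, A s -> A t -> f s = f t -> s = t.

Definition InXi (xi : T -> Prop) : Prop :=
  countable_set xi /\ (forall s t, ext_lt s t -> xi t -> xi s).

(** * D = 2^omega and D^xi
    A point of D^xi is represented by a function x : T -> D which is
    constant (= d0) outside xi; D^empty is then the singleton {fun _ => d0}. *)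
Definition D : Type := nat -> bool.
Definition d0 : D := fun _ => false.
Definition Pt : Type := T -> D.

Definition inD (z : T -> Prop) (x : Pt) : Prop := forall t, ~ z t -> x t = d0.

Definition restr (eta : T -> Prop) (x : Pt) : Pt :=
  fun t => if excluded_middle_informative (eta t) then x t else d0.

Definition restrS (X : Pt -> Prop) (eta : T -> Prop) : Pt -> Prop :=
  fun y => exists x, X x /\ y = restr eta x.

Definition upS (Y : Pt -> Prop) (eta xi : T -> Prop) : Pt -> Prop :=
  fun x => inD xi x /\ Y (restr eta x).

(** * Product topology on D^z, written out via finitely many coordinates *)
Definition agree (F : list (T * nat)) (x y : Pt) : Prop :=
  forall p, In p F -> x (fst p) (snd p) = y (fst p) (snd p).

Definition cont_on (z : T -> Prop) (H : Pt -> Pt) : Prop :=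
  forall x, inD z x -> forall F, exists G, forall x', inD z x' ->
    agree G x x' -> agree F (H x) (H x').

Definition invcont_on (z : T -> Prop) (H : Pt -> Pt) : Prop :=
  forall x, inD z x -> forall F, exists G, forall x', inD z x' ->
    agree G (H x) (H x') -> agree F x x'.

Definition homeo_onto (z : T -> Prop) (H : Pt -> Pt) (X : Pt -> Prop) : Prop :=
  (forall x, inD z x -> inD z (H x)) /\
  (forall y, X y <-> exists x, inD z x /\ y = H x) /\
  (forall x x', inD z x -> inD z x' -> H x = H x' -> x = x') /\
  cont_on z H /\ invcont_on z H.

Definition IPS (z : T -> Prop) (X : Pt -> Prop) : Prop :=
  exists H : Pt -> Pt, homeo_onto z H X /\
    forall x0 x1, inD z x0 -> inD z x1 ->
      forall xi, InXi xi -> (forall t, xi t -> z t) ->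
        (restr xi x0 = restr xi x1 <-> restr xi (H x0) = restr xi (H x1)).

Definition interS (a b : T -> Prop) : T -> Prop := fun t => a t /\ b t.

(* Main.v *)
Require Import Defs.
From Stdlib Require Import List ClassicalEpsilon Classical FunctionalExtensionality
  PropExtensionality ProofIrrelevance Lia Wf_nat Cantor Wellfounded.
Import ListNotations.

Lemma restr_at (a : T -> Prop) x t : a t -> restr a x t = x t.
Proof. intro h; unfold restr; destruct (excluded_middle_informative (a t)); tauto. Qed.
Lemma restr_out (a : T -> Prop) x t : ~ a t -> restr a x t = d0.
Proof. intro h; unfold restr; destruct (excluded_middle_informative (a t)); tauto. Qed.
Lemma restr_id (a : T -> Prop) x : inD a x -> restr a x = x.
Proof.
  intro h; extensionality t; destruct (classic (a t)) as [H|H].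
  - now rewrite restr_at. - rewrite restr_out by auto. now rewrite h.
Qed.
Lemma restr_inD (a : T -> Prop) x : inD a (restr a x).
Proof. intros t h; now apply restr_out. Qed.
Lemma restr_restr (a b : T -> Prop) x : (forall t, b t -> a t) -> restr b (restr a x) = restr b x.
Proof.
  intro h; extensionality t; destruct (classic (b t)) as [H|H].
  - rewrite !restr_at; auto. - now rewrite !restr_out.
Qed.
Lemma restr_eq (a : T -> Prop) x y : (forall t, a t -> x t = y t) -> restr a x = restr a y.
Proof.
  intro h; extensionality t; destruct (classic (a t)) as [H|H].
  - rewrite !restr_at; auto. - now rewrite !restr_out.
Qed.
Lemma restr_eq_inv (a : T -> Prop) x y t : restr a x = restr a y -> a t -> x t = y t.
Proof. intros h ht. rewrite <- (restr_at a x t ht), <- (restr_at a y t ht). now rewrite h. Qed.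
Lemma inD_mono (a b : T -> Prop) x : (forall t, a t -> b t) -> inD a x -> inD b x.
Proof. intros h hx t ht. apply hx. intro; apply ht; auto. Qed.
Lemma inD_ext (a : T -> Prop) x y : inD a x -> inD a y -> (forall t, a t -> x t = y t) -> x = y.
Proof.
  intros hx hy h. extensionality t. destruct (classic (a t)); auto. rewrite hx, hy; auto.
Qed.
Lemma restrS_restrS (A : Pt -> Prop) (a b : T -> Prop) :
  (forall t, b t -> a t) -> restrS (restrS A a) b = restrS A b.
Proof.
  intro h. extensionality y. apply propositional_extensionality. split.
  - intros [x [[x' [Hx' ->]] ->]]. exists x'. split; auto. now apply restr_restr.
  - intros [x [Hx ->]]. exists (restr a x). split. exists x; auto. now rewrite restr_restr.
Qed.
Lemma agree_app G1 G2 x y : agree (G1 ++ G2) x y <-> agree G1 x y /\ agree G2 x y.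
Proof.
  unfold agree; split.
  - intro h; split; intros p hp; apply h; apply in_or_app; auto.
  - intros [h1 h2] p hp; apply in_app_or in hp; destruct hp; auto.
Qed.

Definition inhPt : inhabited Pt := inhabits (fun _ => d0).

Definition len (t : T) : nat := length (proj1_sig t).
Definition strict (t : T) : T -> Prop := fun s => ext_lt s t.
Definition down (t : T) : T -> Prop := fun s => ext_lt s t \/ s = t.

Lemma ext_lt_len s t : ext_lt s t -> len s < len t.
Proof.
  intros [u [hu e]]. unfold len. rewrite e, length_app.
  destruct u; [congruence|simpl; lia].
Qed.
Lemma ext_lt_trans r s t : ext_lt r s -> ext_lt s t -> ext_lt r t.
Proof.
  intros [u [hu e]] [v [hv f]]. exists (u ++ v). split.
  - destruct u; simpl; congruence.
  - rewrite f, e. now rewrite app_assoc.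
Qed.
Lemma ext_lt_irr t : ~ ext_lt t t.
Proof. intro h. apply ext_lt_len in h. lia. Qed.
Lemma wf_ext : well_founded ext_lt.
Proof.
  apply (Wellfounded.Inclusion.wf_incl _ _ (fun s t => len s < len t)).
  - intros s t h; now apply ext_lt_len.
  - apply (well_founded_lt_compat _ len). auto.
Qed.
Lemma T_eq (s t : T) : proj1_sig s = proj1_sig t -> s = t.
Proof.
  destruct s as [s hs], t as [t ht]; simpl; intros ->. f_equal. apply proof_irrelevance.
Qed.
Lemma down_len_inj t s s' : down t s -> down t s' -> len s = len s' -> s = s'.
Proof.
  intros h1 h2 hl. apply T_eq.
  assert (P : forall r, down t r -> exists u, proj1_sig t = proj1_sig r ++ u).
  { intros r [[u [_ e]]| ->]. eauto. exists []. now rewrite app_nil_r. }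
  destruct (P _ h1) as [u e1], (P _ h2) as [u' e2]. unfold len in hl.
  assert (E : firstn (length (proj1_sig s)) (proj1_sig t) = proj1_sig s)
    by (rewrite e1; now rewrite firstn_app, PeanoNat.Nat.sub_diag, firstn_O, app_nil_r, firstn_all).
  assert (E' : firstn (length (proj1_sig s')) (proj1_sig t) = proj1_sig s')
    by (rewrite e2; now rewrite firstn_app, PeanoNat.Nat.sub_diag, firstn_O, app_nil_r, firstn_all).
  rewrite <- E, <- E', hl. reflexivity.
Qed.
Lemma strict_down t s : strict t s -> down t s.
Proof. now left. Qed.
Lemma down_self t : down t t.
Proof. now right. Qed.
Lemma down_trans t s r : down t s -> down s r -> down t r.
Proof.
  intros [h| ->] [h'| ->]; unfold down; auto. left; eapply ext_lt_trans; eauto.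
Qed.
Lemma down_strict t s r : strict t s -> down s r -> strict t r.
Proof. intros h [h'| ->]; auto. eapply ext_lt_trans; eauto. Qed.
Lemma down_cases t s : down t s -> strict t s \/ s = t.
Proof. auto. Qed.
Lemma InXi_down t : InXi (down t).
Proof.
  split. exists len. intros s s' h1 h2 e. eapply down_len_inj; eauto.
  intros r s h hs. eapply down_trans; eauto. now left.
Qed.
Lemma InXi_strict t : InXi (strict t).
Proof.
  split. exists len. intros s s' h1 h2 e. apply (down_len_inj t); auto; now left.
  intros r s h hs. eapply ext_lt_trans; eauto.
Qed.
Lemma dc_down (xi : T -> Prop) t s : (forall a b, ext_lt a b -> xi b -> xi a) -> xi t -> down t s -> xi s.
Proof. intros h ht [hs| ->]; eauto. Qed.
Lemma dc_strict (xi : T -> Prop) t s : (forall a b, ext_lt a b -> xi b -> xi a) -> xi t -> strict t s -> xi s.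
Proof. intros h ht hs; eauto. Qed.

Section Cluster.
Variable a : nat -> nat -> bool.
Definition infin (p : nat -> bool) (k : nat) : Prop :=
  forall N, exists m, N <= m /\ forall j, j < k -> a m j = p j.
Definition upd (p : nat -> bool) (k : nat) (v : bool) : nat -> bool :=
  fun j => if PeanoNat.Nat.eqb j k then v else p j.
Definition stepb (p : nat -> bool) (k : nat) : nat -> bool :=
  if excluded_middle_informative (infin (upd p k false) (S k)) then upd p k false
  else upd p k true.
Fixpoint pref (k : nat) : nat -> bool :=
  match k with 0 => fun _ => false | S k => stepb (pref k) k end.
Lemma step_inf p k : infin p k -> infin (stepb p k) (S k).
Proof.
  intro h. unfold stepb. destruct (excluded_middle_informative _) as [h1|h1]; auto.
  intro N. apply not_all_ex_not in h1. destruct h1 as [N1 h1].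
  destruct (h (max N N1)) as [m [hm hj]].
  exists m. split. lia. intros j hj'.
  unfold upd. destruct (PeanoNat.Nat.eqb_spec j k).
  - subst j. destruct (a m k) eqn:E; auto. exfalso. apply h1. exists m. split. lia.
    intros j hj2. unfold upd. destruct (PeanoNat.Nat.eqb_spec j k). subst; auto. apply hj. lia.
  - apply hj. lia.
Qed.
Lemma pref_inf k : infin (pref k) k.
Proof.
  induction k. intro N. exists N. split; auto. intros; lia.
  simpl. now apply step_inf.
Qed.
Lemma pref_stable k j : j < k -> pref k j = pref (S j) j.
Proof.
  induction k; intro h. lia.
  destruct (PeanoNat.Nat.eq_dec j k). subst; auto.
  simpl. unfold stepb. assert (E : forall v, upd (pref k) k v j = pref k j).
  { intro v. unfold upd. destruct (PeanoNat.Nat.eqb_spec j k); [lia|auto]. }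
  destruct (excluded_middle_informative _); rewrite E; apply IHk; lia.
Qed.
Lemma cluster : exists b : nat -> bool, forall k N, exists m, N <= m /\ forall j, j < k -> a m j = b j.
Proof.
  exists (fun j => pref (S j) j). intros k N. destruct (pref_inf k N) as [m [hm hj]].
  exists m. split; auto. intros j hjk. rewrite hj; auto. now apply pref_stable.
Qed.
End Cluster.

Fixpoint maxl (l : list nat) : nat := match l with [] => 0 | x :: l => max x (maxl l) end.
Lemma maxl_in x l : In x l -> x <= maxl l.
Proof. induction l; simpl; intros h; [contradiction|]. destruct h as [h|h]. subst; lia. specialize (IHl h); lia. Qed.

Definition grid (e : nat -> T) (m : nat) : list (T * nat) :=
  flat_map (fun k => map (fun i => (e k, i)) (seq 0 m)) (seq 0 m).
Lemma grid_in e m k i : k < m -> i < m -> In (e k, i) (grid e m).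
Proof.
  intros hk hi. unfold grid. apply in_flat_map. exists k. split.
  apply in_seq; lia. apply in_map_iff. exists i. split; auto. apply in_seq; lia.
Qed.

Lemma CL (z : T -> Prop) (f : Pt -> Pt) :
  countable_set z -> (forall x, inD z x -> inD z (f x)) -> cont_on z f ->
  (forall x x', inD z x -> inD z x' -> f x = f x' -> x = x') -> invcont_on z f.
Proof.
  intros [g hg] hf hc hinj x hx F.
  destruct (classic (exists t0, z t0)) as [[t0 ht0]|hne].
  2:{ exists []. intros x' hx' _ p _. assert (x = x').
      { apply (inD_ext z); auto. intros t ht; exfalso; eauto. } now subst. }
  apply NNPP; intro hno.
  assert (hseq : forall G, exists x', inD z x' /\ agree G (f x) (f x') /\ ~ agree F x x').
  { intro G. apply NNPP; intro h. apply hno. exists G. intros x' hx' ha.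
    apply NNPP; intro h2. apply h. eauto. }
  set (e := fun k => epsilon (inhabits t0) (fun t => z t /\ g t = k)).
  assert (he : forall t, z t -> e (g t) = t).
  { intros t ht. unfold e. destruct (epsilon_spec (inhabits t0) (fun s => z s /\ g s = g t))
      as [h1 h2]. eauto. apply hg; auto. }
  set (xs := fun m => proj1_sig (constructive_indefinite_description _ (hseq (grid e m)))).
  assert (hxs : forall m, inD z (xs m) /\ agree (grid e m) (f x) (f (xs m)) /\ ~ agree F x (xs m)).
  { intro m. unfold xs. destruct (constructive_indefinite_description _ _); auto. }
  set (a := fun m c => let p := of_nat c in xs m (e (fst p)) (snd p)).
  destruct (cluster a) as [b hb].
  set (xst := fun t => if excluded_middle_informative (z t) then (fun i => b (to_nat (g t, i))) else d0).
  assert (hxst : inD z xst). { intros t ht. unfold xst. destruct (excluded_middle_informative _); tauto. }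
  assert (approx : forall L N, exists m, N <= m /\ agree L (xs m) xst).
  { intros L N.
    destruct (hb (S (maxl (map (fun p => to_nat (g (fst p), snd p)) L))) N) as [m [hm hj]].
    exists m. split; auto. intros [t i] hin. simpl.
    destruct (classic (z t)) as [ht|ht].
    - unfold xst. destruct (excluded_middle_informative _); [|tauto].
      rewrite <- hj. unfold a. rewrite cancel_of_to. simpl. now rewrite he.
      apply PeanoNat.Nat.lt_succ_r. apply maxl_in. apply in_map_iff. exists (t,i); auto.
    - destruct (hxs m) as [h1 _]. rewrite h1, hxst; auto. }
  assert (hfe : f xst = f x).
  { extensionality t. extensionality i. destruct (classic (z t)) as [ht|ht].
    - destruct (hc xst hxst [(t,i)]) as [G hG].
      destruct (approx G (S (max (g t) i))) as [m [hm hag]].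
      assert (hag' : agree G xst (xs m)) by (intros p hp; symmetry; auto).
      destruct (hxs m) as [h1 [h2 h3]].
      specialize (hG (xs m) h1 hag' (t,i) (or_introl eq_refl)). simpl in hG.
      rewrite hG. symmetry. specialize (h2 (e (g t), i)). rewrite he in h2 by auto. apply h2.
      pose proof (grid_in e m (g t) i) as gi. rewrite he in gi by auto. apply gi; lia.
    - rewrite (hf _ hxst t ht), (hf _ hx t ht). reflexivity. }
  assert (xst = x) by (apply hinj; auto). subst xst.
  destruct (approx F 0) as [m [_ hag]]. destruct (hxs m) as [_ [_ h3]]. apply h3.
  intros p hp. symmetry. rewrite <- H. auto.
Qed.

Definition ipsprop (z : T -> Prop) (H : Pt -> Pt) : Prop :=
  forall x0 x1, inD z x0 -> inD z x1 ->
      forall xi, InXi xi -> (forall t, xi t -> z t) ->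
        (restr xi x0 = restr xi x1 <-> restr xi (H x0) = restr xi (H x1)).

Definition dclosed (xi : T -> Prop) : Prop := forall s t, ext_lt s t -> xi t -> xi s.

Lemma ips_glue (z : T -> Prop) (X : Pt -> Prop) (H : Pt -> Pt) (xi : T -> Prop) (x : Pt) :
  homeo_onto z H X -> ipsprop z H -> dclosed xi -> (forall t, xi t -> z t) ->
  inD xi x -> (forall s, xi s -> restrS X (down s) (restr (down s) x)) -> restrS X xi x.
Proof.
  intros [_ [hX _]] hips hdc hsub hx hloc.
  assert (hex : forall s, xi s -> exists a, inD z a /\ restr (down s) (H a) = restr (down s) x).
  { intros s hs. destruct (hloc s hs) as [x0 [h0 e]]. apply hX in h0.
    destruct h0 as [a [ha ->]]. eauto. }
  set (A := fun s => epsilon inhPt (fun a => inD z a /\ restr (down s) (H a) = restr (down s) x)).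
  assert (hA : forall s, xi s -> inD z (A s) /\ restr (down s) (H (A s)) = restr (down s) x).
  { intros s hs. unfold A. apply epsilon_spec. auto. }
  set (w := fun t => if excluded_middle_informative (xi t) then A t t else d0).
  assert (hw : inD z w).
  { intros t ht. unfold w. destruct (excluded_middle_informative _); auto. exfalso; auto. }
  assert (hdsub : forall s r, xi s -> down s r -> xi r) by (intros; eapply dc_down; eauto).
  assert (hwd : forall s, xi s -> restr (down s) w = restr (down s) (A s)).
  { intros s hs. apply restr_eq. intros r hr. unfold w.
    destruct (excluded_middle_informative _) as [h|h]; [|exfalso; eauto].
    destruct (hA r h) as [h1 h2], (hA s hs) as [h3 h4].
    assert (E : restr (down r) (H (A r)) = restr (down r) (H (A s))).
    { rewrite h2. rewrite <- (restr_restr (down s) (down r) x) by (intros; eapply down_trans; eauto).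
      rewrite <- h4. rewrite restr_restr by (intros; eapply down_trans; eauto). reflexivity. }
    apply (hips _ _ h1 h3 (down r) (InXi_down r)) in E.
    - eapply restr_eq_inv; eauto. apply down_self.
    - intros q hq; apply hsub; eauto. }
  exists (H w). split. apply hX; eauto.
  apply (inD_ext xi). auto. apply restr_inD.
  intros t ht. rewrite restr_at by auto.
  destruct (hA t ht) as [h1 h2].
  assert (E : restr (down t) (H w) = restr (down t) (H (A t))).
  { apply (proj1 (hips w (A t) hw h1 (down t) (InXi_down t) ltac:(intros q hq; apply hsub; eauto))).
    now apply hwd. }
  rewrite <- E in h2. eapply restr_eq_inv; eauto. apply down_self.
Qed.

Section Main.
Variables (xi : nat -> T -> Prop) (Xs : nat -> Pt -> Prop).
Hypothesis Hxi : forall n, InXi (xi n).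
Hypothesis HI : forall n, IPS (xi n) (Xs n).
Hypothesis Hcoh : forall k n, restrS (Xs n) (interS (xi k) (xi n))
                  = restrS (Xs k) (interS (xi k) (xi n)).

Definition theta : T -> Prop := fun t => exists n, xi n t.
Definition Hs (n : nat) : Pt -> Pt := proj1_sig (constructive_indefinite_description _ (HI n)).
Lemma HsP n : homeo_onto (xi n) (Hs n) (Xs n) /\ ipsprop (xi n) (Hs n).
Proof. unfold Hs. destruct (constructive_indefinite_description _ _). auto. Qed.
Lemma xi_dc n : dclosed (xi n).
Proof. exact (proj2 (Hxi n)). Qed.
Lemma Hs_in n a : inD (xi n) a -> Xs n (Hs n a).
Proof. intro h. destruct (HsP n) as [[_ [hX _]] _]. apply hX; eauto. Qed.
Lemma Xs_inv n x : Xs n x -> exists a, inD (xi n) a /\ x = Hs n a.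
Proof. intro h. destruct (HsP n) as [[_ [hX _]] _]. now apply hX. Qed.
Lemma Hs_ips n a b (S : T -> Prop) : inD (xi n) a -> inD (xi n) b -> InXi S -> (forall t, S t -> xi n t) ->
  (restr S a = restr S b <-> restr S (Hs n a) = restr S (Hs n b)).
Proof. intros. destruct (HsP n) as [_ h]. apply h; auto. Qed.
Lemma down_xi n t s : xi n t -> down t s -> xi n s.
Proof. intros; eapply dc_down; eauto. apply xi_dc. Qed.
Lemma strict_xi n t s : xi n t -> strict t s -> xi n s.
Proof. intros; eapply down_xi; eauto. now left. Qed.
Lemma theta_dc : dclosed theta.
Proof. intros s t h [n hn]. exists n. eapply xi_dc; eauto. Qed.

Definition nt (t : T) : nat := epsilon (inhabits 0) (fun n => xi n t).
Lemma nt_spec t : theta t -> xi (nt t) t.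
Proof. intro h. unfold nt. apply epsilon_spec. exact h. Qed.
Definition Y (t : T) : Pt -> Prop := restrS (Xs (nt t)) (down t).
Lemma Y_coh m t : xi m t -> restrS (Xs m) (down t) = Y t.
Proof.
  intro hm. assert (ht : theta t) by (exists m; exact hm). pose proof (nt_spec t ht) as hn.
  unfold Y. set (I := interS (xi m) (xi (nt t))).
  assert (hsub : forall s, down t s -> I s) by (intros s hs; split; eapply down_xi; eauto).
  rewrite <- (restrS_restrS (Xs m) I) by auto. rewrite <- (restrS_restrS (Xs (nt t)) I) by auto.
  unfold I. now rewrite Hcoh.
Qed.

Definition Wp (prev : Pt) (t : T) : Pt :=
  epsilon inhPt (fun w => inD (strict t) w /\
     restr (strict t) (Hs (nt t) w) = restr (strict t) prev).
Definition updT (w : Pt) (t : T) (d : D) : Pt :=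
  fun s => if excluded_middle_informative (s = t) then d else w s.
Definition kval (y prev : Pt) (t : T) : D := Hs (nt t) (updT (Wp prev t) t (y t)) t.

Definition Kf (y : Pt) : Pt :=
  Fix wf_ext (fun _ => D) (fun t rec =>
    if excluded_middle_informative (theta t) then
      kval y (fun s => match excluded_middle_informative (ext_lt s t) with
                       | left h => rec s h | right _ => d0 end) t
    else d0).

Lemma K_unfold y t : Kf y t =
  if excluded_middle_informative (theta t) then kval y (restr (strict t) (Kf y)) t else d0.
Proof.
  unfold Kf at 1. rewrite Fix_eq. reflexivity.
  intros x f g hfg. destruct (excluded_middle_informative _); auto.
  f_equal. extensionality s. destruct (excluded_middle_informative _); auto.
Qed.
Lemma K_out y t : ~ theta t -> Kf y t = d0.
Proof. intro h. rewrite K_unfold. destruct (excluded_middle_informative _); tauto. Qed.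
Lemma K_in y t : theta t -> Kf y t = kval y (restr (strict t) (Kf y)) t.
Proof. intro h. rewrite K_unfold. destruct (excluded_middle_informative _); tauto. Qed.
Lemma K_inD y : inD theta (Kf y).
Proof. intros t h. now apply K_out. Qed.

Lemma K_dep t : forall y y', (forall r, down t r -> y r = y' r) -> Kf y t = Kf y' t.
Proof.
  induction t as [t IH] using (well_founded_ind wf_ext). intros y y' h.
  destruct (classic (theta t)) as [ht|ht]; [|now rewrite !K_out].
  rewrite !K_in by auto.
  assert (E : restr (strict t) (Kf y) = restr (strict t) (Kf y')).
  { apply restr_eq. intros s hs. apply IH; auto. intros r hr. apply h.
    apply strict_down. eapply down_strict; eauto. }
  rewrite E. unfold kval. rewrite (h t (down_self t)). reflexivity.
Qed.

Lemma upd_inD w t d : inD (strict t) w -> inD (down t) (updT w t d).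
Proof.
  intros h s hs. unfold updT. destruct (excluded_middle_informative _).
  subst; exfalso; apply hs, down_self. apply h. intro; apply hs; now left.
Qed.
Lemma upd_strict w t d : restr (strict t) (updT w t d) = restr (strict t) w.
Proof.
  apply restr_eq. intros s hs. unfold updT. destruct (excluded_middle_informative _); auto.
  subst; exfalso; eapply ext_lt_irr; eauto.
Qed.
Lemma upd_at w t d : updT w t d t = d.
Proof. unfold updT. destruct (excluded_middle_informative _); congruence. Qed.

Definition Pre (y : Pt) (t : T) : Prop :=
  restrS (Xs (nt t)) (strict t) (restr (strict t) (Kf y)).

Lemma Kspec y t : theta t -> Pre y t ->
  let n := nt t in let w := Wp (restr (strict t) (Kf y)) t in
  inD (strict t) w /\ restr (strict t) (Hs n w) = restr (strict t) (Kf y) /\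
  restr (down t) (Kf y) = restr (down t) (Hs n (updT w t (y t))).
Proof.
  intros ht hpre n w. pose proof (nt_spec t ht) as hn. fold n in hn.
  assert (hw : inD (strict t) w /\ restr (strict t) (Hs n w) = restr (strict t) (restr (strict t) (Kf y))).
  { unfold w, Wp. apply epsilon_spec. destruct hpre as [x0 [h0 e]].
    destruct (Xs_inv _ _ h0) as [a [ha ->]]. exists (restr (strict t) a). split. apply restr_inD.
    rewrite restr_restr by auto. rewrite e.
    apply Hs_ips; auto. eapply inD_mono; [|apply restr_inD]. intros; eapply strict_xi; eauto.
    apply InXi_strict. intros; eapply strict_xi; eauto. now rewrite restr_restr. }
  rewrite restr_restr in hw by auto. destruct hw as [hw1 hw2]. split; auto. split; auto.
  apply restr_eq. intros s [hs| ->].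
  - rewrite <- (restr_at (strict t) (Kf y) s hs). rewrite <- hw2. rewrite restr_at by auto.
    assert (E : restr (strict t) (Hs n w) = restr (strict t) (Hs n (updT w t (y t)))).
    { apply Hs_ips. eapply inD_mono; [|eauto]. intros; eapply strict_xi; eauto.
      eapply inD_mono; [|apply upd_inD; eauto]. intros; eapply down_xi; eauto.
      apply InXi_strict. intros; eapply strict_xi; eauto. now rewrite upd_strict. }
    eapply restr_eq_inv; eauto.
  - rewrite K_in by auto. reflexivity.
Qed.

Lemma Pre_from y t : theta t -> (forall s, strict t s -> Y s (restr (down s) (Kf y))) -> Pre y t.
Proof.
  intros ht h. pose proof (nt_spec t ht) as hn. unfold Pre.
  eapply ips_glue. apply HsP. apply HsP. exact (proj2 (InXi_strict t)). intros; eapply strict_xi; eauto.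
  apply restr_inD.
  intros s hs. rewrite restr_restr by (intros; eapply down_strict; eauto).
  rewrite (Y_coh (nt t) s). auto. eapply strict_xi; eauto.
Qed.

Lemma Inv t : theta t -> forall y, Y t (restr (down t) (Kf y)).
Proof.
  induction t as [t IH] using (well_founded_ind wf_ext). intros ht y.
  assert (hpre : Pre y t).
  { apply Pre_from; auto. intros s hs. apply IH; auto. eapply theta_dc; eauto. }
  destruct (Kspec y t ht hpre) as [h1 [h2 h3]]. rewrite h3.
  pose proof (nt_spec t ht) as hn. exists (Hs (nt t) (updT (Wp (restr (strict t) (Kf y)) t) t (y t))).
  split; auto. apply Hs_in. eapply inD_mono; [|apply upd_inD; eauto]. intros; eapply down_xi; eauto.
Qed.

Lemma Pre_all y t : theta t -> Pre y t.
Proof.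
  intro ht. apply Pre_from; auto. intros s hs. apply Inv. eapply theta_dc; eauto.
Qed.

Lemma K_inj_loc t y y' : theta t -> restr (down t) (Kf y) = restr (down t) (Kf y') -> y t = y' t.
Proof.
  intros ht e. pose proof (nt_spec t ht) as hn.
  assert (E : restr (strict t) (Kf y) = restr (strict t) (Kf y')).
  { rewrite <- (restr_restr (down t) (strict t) (Kf y)) by (intros; now left).
    rewrite e. apply restr_restr. intros; now left. }
  destruct (Kspec y t ht (Pre_all y t ht)) as [h1 [h2 h3]].
  destruct (Kspec y' t ht (Pre_all y' t ht)) as [h1' [h2' h3']].
  rewrite E in h1, h3. rewrite e, h3' in h3.
  set (w := Wp (restr (strict t) (Kf y')) t) in *.
  apply Hs_ips in h3.
  - rewrite <- (upd_at w t (y t)), <- (upd_at w t (y' t)). eapply restr_eq_inv; eauto. apply down_self.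
  - eapply inD_mono; [|apply upd_inD; eauto]. intros; eapply down_xi; eauto.
  - eapply inD_mono; [|apply upd_inD; eauto]. intros; eapply down_xi; eauto.
  - apply InXi_down.
  - intros; eapply down_xi; eauto.
Qed.


Lemma Hs_inD n a : inD (xi n) a -> inD (xi n) (Hs n a).
Proof. destruct (HsP n) as [[h _] _]. apply h. Qed.
Lemma Hs_cont n : cont_on (xi n) (Hs n).
Proof. destruct (HsP n) as [[_ [_ [_ [h _]]]] _]. exact h. Qed.

Lemma U r u1 u2 : theta r -> inD (down r) u1 -> inD (down r) u2 ->
  restr (down r) (Kf u1) = restr (down r) (Kf u2) -> u1 = u2.
Proof.
  intros hr h1 h2 e. apply (inD_ext (down r)); auto. intros q hq.
  apply (K_inj_loc q). eapply dc_down; eauto. apply theta_dc.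
  rewrite <- (restr_restr (down r) (down q) (Kf u1)) by (intros; eapply down_trans; eauto).
  rewrite e. apply restr_restr. intros; eapply down_trans; eauto.
Qed.

Section GS.
Variables (zeta : T -> Prop) (x : Pt).
Hypothesis hzdc : dclosed zeta.
Hypothesis hzsub : forall t, zeta t -> theta t.
Hypothesis hzY : forall t, zeta t -> Y t (restr (down t) x).

Definition cc (t : T) : Pt :=
  epsilon inhPt (fun u => inD (down t) u /\ restr (down t) (Kf u) = restr (down t) x).
Definition Cgood t := inD (down t) (cc t) /\ restr (down t) (Kf (cc t)) = restr (down t) x.
Definition glue (Z : T -> Prop) : Pt := fun r => if excluded_middle_informative (Z r) then cc r r else d0.

Lemma glue_ok Z : dclosed Z -> (forall s, Z s -> zeta s) -> (forall s, Z s -> Cgood s) ->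
  forall s, Z s -> restr (down s) (glue Z) = cc s.
Proof.
  intros hdc hsub hg s hs. destruct (hg s hs) as [hs1 hs2].
  apply (inD_ext (down s)). apply restr_inD. auto.
  intros r hr. rewrite restr_at by auto. unfold glue.
  assert (hZr : Z r) by (eapply dc_down; eauto).
  destruct (excluded_middle_informative _) as [_|h]; [|tauto].
  destruct (hg r hZr) as [hr1 hr2].
  assert (E : cc r = restr (down r) (cc s)).
  { apply (U r). apply hzsub, hsub; auto. auto. apply restr_inD.
    rewrite hr2.
    assert (E1 : restr (down r) (Kf (restr (down r) (cc s))) = restr (down r) (Kf (cc s))).
    { apply restr_eq. intros q hq. apply K_dep. intros p hp. apply restr_at. eapply down_trans; eauto. }
    rewrite E1.
    rewrite <- (restr_restr (down s) (down r) (Kf (cc s))) by (intros; eapply down_trans; eauto).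
    rewrite hs2. symmetry. apply restr_restr. intros; eapply down_trans; eauto. }
  rewrite E. apply restr_at. apply down_self.
Qed.

Lemma glue_K Z : dclosed Z -> (forall s, Z s -> zeta s) -> (forall s, Z s -> Cgood s) ->
  forall s, Z s -> Kf (glue Z) s = x s.
Proof.
  intros hdc hsub hg s hs. pose proof (glue_ok Z hdc hsub hg s hs) as E.
  destruct (hg s hs) as [_ h2].
  rewrite (K_dep s (glue Z) (cc s)).
  - eapply restr_eq_inv; eauto. apply down_self.
  - intros p hp. rewrite <- E. now rewrite restr_at.
Qed.

Lemma Cgood_all t : zeta t -> Cgood t.
Proof.
  induction t as [t IH] using (well_founded_ind wf_ext). intro hzt.
  unfold Cgood, cc. apply epsilon_spec.
  assert (ht : theta t) by auto. pose proof (nt_spec t ht) as hn. set (n := nt t) in *.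
  destruct (hzY t hzt) as [x0 [hx0 ex]]. destruct (Xs_inv _ _ hx0) as [a [ha ->]]. fold n in ex, hx0, ha.
  set (v := glue (strict t)).
  assert (hsd : dclosed (strict t)) by exact (proj2 (InXi_strict t)).
  assert (hss : forall s, strict t s -> zeta s) by (intros; eapply dc_strict; eauto).
  assert (hsg : forall s, strict t s -> Cgood s) by (intros; apply IH; auto).
  assert (hv : inD (strict t) v).
  { intros r hr. unfold v, glue. destruct (excluded_middle_informative _); tauto. }
  set (u := updT v t (a t)). exists u.
  assert (hu : inD (down t) u) by (apply upd_inD; auto).
  assert (hKs : forall s, strict t s -> Kf u s = x s).
  { intros s hs. rewrite (K_dep s u v). apply glue_K; auto.
    intros p hp. unfold u, updT. destruct (excluded_middle_informative _); auto.
    subst p. exfalso. eapply ext_lt_irr. eapply down_strict; eauto. }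
  split; auto.
  destruct (Kspec u t ht (Pre_all u t ht)) as [h1 [h2 h3]]. fold n in h2, h3.
  set (w := Wp (restr (strict t) (Kf u)) t) in *.
  assert (hxi_w : inD (xi n) w) by (eapply inD_mono; [|eauto]; intros; eapply strict_xi; eauto).
  assert (E1 : restr (strict t) (Hs n w) = restr (strict t) (Hs n a)).
  { rewrite h2. rewrite (restr_eq (strict t) (Kf u) x) by auto.
    rewrite <- (restr_restr (down t) (strict t) x) by (intros; now left). rewrite ex.
    apply restr_restr. intros; now left. }
  apply Hs_ips in E1; auto.
  2: exact (InXi_strict t). 2: intros; eapply strict_xi; eauto.
  rewrite (restr_id _ _ h1) in E1.
  assert (E2 : restr (down t) (Hs n (updT w t (u t))) = restr (down t) (Hs n a)).
  { apply Hs_ips; auto. eapply inD_mono; [|apply upd_inD; eauto]. intros; eapply down_xi; eauto.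
    apply InXi_down. intros; eapply down_xi; eauto.
    apply restr_eq. intros s [hs| ->].
    - unfold updT. destruct (excluded_middle_informative _). subst; exfalso; eapply ext_lt_irr; eauto.
      rewrite E1. now rewrite restr_at.
    - rewrite upd_at. unfold u. now rewrite upd_at. }
  rewrite h3, E2. now rewrite ex.
Qed.

Lemma GS_lemma : exists y, inD theta y /\ forall t, zeta t -> Kf y t = x t.
Proof.
  exists (glue zeta). split.
  - intros r hr. unfold glue. destruct (excluded_middle_informative _); auto. exfalso; eauto.
  - intros t ht. apply glue_K; auto. intros; now apply Cgood_all.
Qed.
End GS.

Lemma agree_comb (b : Pt) (Q : Pt -> Prop) (g : Pt -> Pt) (L : list (T * nat)) (P : T * nat -> Pt -> Prop) :
  (forall c, In c L -> exists G, forall y', Q y' -> agree G b (g y') -> P c y') ->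
  exists G, forall y', Q y' -> agree G b (g y') -> forall c, In c L -> P c y'.
Proof.
  induction L as [|c L IHL]; intro h.
  - exists []. intros y' _ _ c [].
  - destruct (h c (or_introl eq_refl)) as [G1 h1].
    destruct IHL as [G2 h2]. intros; apply h; now right.
    exists (G1 ++ G2). intros y' hq ha. apply agree_app in ha. destruct ha as [ha1 ha2].
    intros c' [e|hc]. subst; auto. eauto.
Qed.

Lemma agree_restr G S x x' : agree G x x' -> agree G (restr S x) (restr S x').
Proof.
  intros h [s j] hp. simpl. destruct (classic (S s)).
  rewrite !restr_at by auto. apply (h (s,j) hp). now rewrite !restr_out.
Qed.

Lemma h_invcont n S : InXi S -> (forall t, S t -> xi n t) ->
  invcont_on S (fun w => restr S (Hs n w)).
Proof.
  intros hS hsub. apply CL. apply hS.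
  - intros; apply restr_inD.
  - intros w0 hw0 F. assert (hw0' : inD (xi n) w0) by (eapply inD_mono; eauto).
    destruct (Hs_cont n w0 hw0' F) as [G hG]. exists G. intros w' hw' ha.
    apply agree_restr. apply hG; auto. eapply inD_mono; eauto.
  - intros a b ha hb e. apply Hs_ips in e; auto.
    rewrite (restr_id _ _ ha), (restr_id _ _ hb) in e. auto.
    eapply inD_mono; eauto. eapply inD_mono; eauto.
Qed.

Lemma K_cont_pt t : forall y i, exists G, forall y', agree G y y' -> Kf y t i = Kf y' t i.
Proof.
  induction t as [t IH] using (well_founded_ind wf_ext). intros y i.
  destruct (classic (theta t)) as [ht|ht].
  2:{ exists []. intros. now rewrite !K_out. }
  pose proof (nt_spec t ht) as hn. set (n := nt t) in *.
  destruct (Kspec y t ht (Pre_all y t ht)) as [h1 [h2 h3]]. fold n in h2, h3.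
  set (w := Wp (restr (strict t) (Kf y)) t) in *.
  set (w1 := updT w t (y t)).
  assert (hw1 : inD (xi n) w1) by (eapply inD_mono; [|apply upd_inD; eauto]; intros; eapply down_xi; eauto).
  destruct (Hs_cont n w1 hw1 [(t,i)]) as [G1 hG1].
  destruct (h_invcont n (strict t) (InXi_strict t) ltac:(intros; eapply strict_xi; eauto) w h1 G1) as [G2 hG2].
  destruct (agree_comb y (fun _ => True) (fun y' => y') G2
     (fun c y' => restr (strict t) (Kf y) (fst c) (snd c) = restr (strict t) (Kf y') (fst c) (snd c)))
     as [G3 hG3].
  { intros [s j] _. simpl. destruct (classic (strict t s)) as [hs|hs].
    - destruct (IH s hs y j) as [G hG]. exists G. intros y' _ ha. rewrite !restr_at by auto. auto.
    - exists []. intros. now rewrite !restr_out. }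
  exists (G1 ++ G3). intros y' ha. apply agree_app in ha. destruct ha as [ha1 ha3].
  destruct (Kspec y' t ht (Pre_all y' t ht)) as [h1' [h2' h3']]. fold n in h2', h3'.
  set (w' := Wp (restr (strict t) (Kf y')) t) in *.
  assert (hag : agree G1 w w').
  { apply hG2; auto. simpl. rewrite h2, h2'. intros c hc. apply (hG3 y' I ha3 c hc). }
  set (w1' := updT w' t (y' t)).
  assert (hw1' : inD (xi n) w1') by (eapply inD_mono; [|apply upd_inD; eauto]; intros; eapply down_xi; eauto).
  assert (hag1 : agree G1 w1 w1').
  { intros [s j] hp. simpl. unfold w1, w1', updT. destruct (excluded_middle_informative _).
    subst s. apply (ha1 (t,j) hp). apply (hag (s,j) hp). }
  specialize (hG1 w1' hw1' hag1 (t,i) (or_introl eq_refl)). simpl in hG1.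
  rewrite (restr_eq_inv _ _ _ t h3 (down_self t)), (restr_eq_inv _ _ _ t h3' (down_self t)).
  exact hG1.
Qed.

Lemma K_cont : cont_on theta Kf.
Proof.
  intros y _ F.
  destruct (agree_comb y (fun _ => True) (fun y' => y') F
     (fun c y' => Kf y (fst c) (snd c) = Kf y' (fst c) (snd c))) as [G hG].
  { intros [t i] _. destruct (K_cont_pt t y i) as [G hG]. exists G. intros; simpl; auto. }
  exists G. intros y' _ ha c hc. apply (hG y' I ha c hc).
Qed.

Lemma K_invcont : invcont_on theta Kf.
Proof.
  intros y hy F.
  destruct (agree_comb (Kf y) (inD theta) Kf F (fun c y' => y (fst c) (snd c) = y' (fst c) (snd c)))
    as [G hG].
  { intros [t i] _. simpl. destruct (classic (theta t)) as [ht|ht].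
    2:{ exists []. intros y' hy' _. now rewrite hy, hy'. }
    pose proof (nt_spec t ht) as hn. set (n := nt t) in *.
    destruct (Kspec y t ht (Pre_all y t ht)) as [h1 [h2 h3]]. fold n in h2, h3.
    set (w := Wp (restr (strict t) (Kf y)) t) in *.
    assert (hw1 : inD (down t) (updT w t (y t))) by (apply upd_inD; auto).
    destruct (h_invcont n (down t) (InXi_down t) ltac:(intros; eapply down_xi; eauto) _ hw1 [(t,i)])
      as [G hG].
    exists G. intros y' hy' ha.
    destruct (Kspec y' t ht (Pre_all y' t ht)) as [h1' [h2' h3']]. fold n in h2', h3'.
    set (w' := Wp (restr (strict t) (Kf y')) t) in *.
    assert (hw1' : inD (down t) (updT w' t (y' t))) by (apply upd_inD; auto).
    specialize (hG _ hw1'). simpl in hG. rewrite <- h3, <- h3' in hG.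
    specialize (hG (agree_restr _ _ _ _ ha) (t,i) (or_introl eq_refl)). simpl in hG.
    rewrite !upd_at in hG. exact hG. }
  exists G. intros y' hy' ha c hc. apply (hG y' hy' ha c hc).
Qed.

Definition Xbig : Pt -> Prop := fun x => forall n, upS (Xs n) (xi n) theta x.

Lemma K_in_X y : Xbig (Kf y).
Proof.
  intro n. split. apply K_inD.
  assert (h : restrS (Xs n) (xi n) (restr (xi n) (Kf y))).
  { eapply ips_glue. apply HsP. apply HsP. apply xi_dc. auto. apply restr_inD.
    intros s hs. rewrite restr_restr by (intros; eapply down_xi; eauto).
    rewrite (Y_coh n s hs). apply Inv. now exists n. }
  destruct h as [x1 [hx1 e]]. rewrite e. destruct (Xs_inv _ _ hx1) as [a [ha ->]].
  rewrite restr_id; auto. now apply Hs_inD.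
Qed.

Theorem main_part : IPS theta Xbig /\ (forall n, restrS Xbig (xi n) = Xs n).
Proof.
  split.
  - exists Kf. split. split; [|split; [|split; [|split]]].
    + intros; apply K_inD.
    + intro x. split.
      * intro hX. assert (hx : inD theta x) by apply (hX 0).
        destruct (GS_lemma theta x theta_dc (fun t h => h)) as [y [hy hK]].
        { intros t [m hm]. rewrite <- (Y_coh m t hm). exists (restr (xi m) x). split.
          apply (hX m). symmetry. apply restr_restr. intros; eapply down_xi; eauto. }
        exists y. split; auto. apply (inD_ext theta); auto. apply K_inD. intros; symmetry; auto.
      * intros [y [_ ->]]. apply K_in_X.
    + intros y y' hy hy' e. apply (inD_ext theta); auto. intros t ht.
      apply (K_inj_loc t); auto. now rewrite e.
    + apply K_cont.
    + apply K_invcont.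
    + intros x0 x1 h0 h1 z hz hsub. split.
      * intro e. apply restr_eq. intros t ht. apply K_dep. intros r hr.
        eapply restr_eq_inv; eauto. eapply dc_down; eauto. exact (proj2 hz).
      * intro e. apply restr_eq. intros t ht. apply (K_inj_loc t); auto.
        apply restr_eq. intros r hr. eapply restr_eq_inv; eauto. eapply dc_down; eauto. exact (proj2 hz).
  - intro n. extensionality x0. apply propositional_extensionality. split.
    + intros [x [hx ->]]. apply (hx n).
    + intro h0. destruct (Xs_inv _ _ h0) as [a [ha ->]].
      destruct (GS_lemma (xi n) (Hs n a) (xi_dc n) (fun t h => ex_intro _ n h)) as [y [hy hK]].
      { intros t ht. rewrite <- (Y_coh n t ht). exists (Hs n a); auto. }
      exists (Kf y). split. apply K_in_X. apply (inD_ext (xi n)). now apply Hs_inD. apply restr_inD.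
      intros t ht. rewrite restr_at by auto. symmetry; auto.
Qed.

End Main.

Lemma Xs_nonempty (z : T -> Prop) (A : Pt -> Prop) : IPS z A -> exists a, A a.
Proof.
  intros [H [[_ [hX _]] _]]. exists (H (fun _ => d0)). apply hX. exists (fun _ => d0).
  split; auto. intros t _. reflexivity.
Qed.

Lemma restrS_empty (A : Pt -> Prop) (E : T -> Prop) : (forall t, ~ E t) -> (exists a, A a) ->
  restrS A E = fun y => y = (fun _ => d0).
Proof.
  intros hE [a ha]. extensionality y. apply propositional_extensionality. split.
  - intros [x [_ ->]]. extensionality t. now apply restr_out.
  - intros ->. exists a. split; auto. extensionality t. symmetry. now apply restr_out.
Qed.

Theorem lemma2p26 :
  forall (xi : nat -> T -> Prop) (Xs : nat -> Pt -> Prop),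
    (forall n, InXi (xi n)) ->
    (forall n, IPS (xi n) (Xs n)) ->
    let theta : T -> Prop := fun t => exists n, xi n t in
    let X : Pt -> Prop := fun x => forall n, upS (Xs n) (xi n) theta x in
    ((forall k n, restrS (Xs n) (interS (xi k) (xi n))
                  = restrS (Xs k) (interS (xi k) (xi n))) ->
       IPS theta X /\ (forall n, restrS X (xi n) = Xs n))
    /\
    ((forall k n, k <> n -> forall t, ~ (xi k t /\ xi n t)) ->
       (forall k n, restrS (Xs n) (interS (xi k) (xi n))
                    = restrS (Xs k) (interS (xi k) (xi n))) /\
       IPS theta X /\ (forall n, restrS X (xi n) = Xs n)).
Proof.
  intros xi Xs Hxi HI theta X. split.
  - intro Hcoh. exact (main_part xi Xs Hxi HI Hcoh).
  - intro Hdisj.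
    assert (Hcoh : forall k n, restrS (Xs n) (interS (xi k) (xi n))
                    = restrS (Xs k) (interS (xi k) (xi n))).
    { intros k n. destruct (PeanoNat.Nat.eq_dec k n) as [->|hne]; [reflexivity|].
      rewrite !restrS_empty; auto.
      - intros t [h1 h2]. eapply Hdisj; eauto.
      - eapply Xs_nonempty; eauto.
      - intros t [h1 h2]. eapply Hdisj; eauto.
      - eapply Xs_nonempty; eauto. }
    split; [exact Hcoh|]. exact (main_part xi Xs Hxi HI Hcoh).
Qed.
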